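(* Let $E$ be an $\mathbf{a}$-dimensional linear space of $\mathbf{b}\times\mathbf{c}$ complex matrices of bounded rank $r$, with basis $E_1,\dots,E_{\mathbf{a}}$, and let $F\subset \operatorname{End}(\mathbb{C}^k)$ be an $\mathbf{a}$-dimensional linear space of pairwise commuting matrices, with basis $F_1,\dots,F_{\mathbf{a}}$. Let $\tilde E$ be the linear space of $\mathbf{b}k\times\mathbf{c}k$ matrices obtained as follows: for each $i$, replace each entry $e$ of $E_i$ by the $k\times k$ block $eF_i$ (i.e., form the Kronecker product $E_i\otimes F_i$), and let $\tilde E$ be the span of the resulting matrices, $\tilde E=\{\sum_{i} t_i\, E_i\otimes F_i : t_i\in\mathbb{C}\}$. Then every element of $\tilde E$ has rank at most $kr$.
   Context: A linear space of $\mathbf{b}\times\mathbf{c}$ matrices is of bounded rank $r$ if the maximal rank of its elements is $r$ and $r<\min\{\mathbf{b},\mathbf{c}\}$. *)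

(* Defs.v *)
From HB Require Import structures.
From mathcomp Require Import all_boot all_order all_algebra.
From mathcomp Require Export complex mxtens.
From mathcomp Require Export Rstruct.
Set Implicit Arguments. Unset Strict Implicit. Unset Printing Implicit Defensive.
Import Order.TTheory GRing.Theory Num.Theory.
Local Open Scope ring_scope.

Notation C := (Rdefinitions.R)[i].

Definition bounded_rank (a b c : nat) (E : 'I_a -> 'M[C]_(b, c)) (r : nat) : Prop :=
  [/\ (forall t : 'I_a -> C, (\rank (\sum_(i < a) t i *: E i)%R <= r)%N),
      (exists t : 'I_a -> C, \rank (\sum_(i < a) t i *: E i)%R = r)
    & (r < minn b c)%N].

(* Main.v *)
Require Import Defs.
From HB Require Import structures.
From mathcomp Require Import all_boot all_order all_algebra.
From mathcomp Require Import complex mxtens.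
From mathcomp Require Import ring.
Set Implicit Arguments. Unset Strict Implicit. Unset Printing Implicit Defensive.
Import Order.TTheory GRing.Theory Num.Theory.
Local Open Scope ring_scope.

Lemma poly_allroots (g : {poly C}) : (forall x, g.[x] = 0) -> g = 0.
Proof.
move=> H; apply: (@roots_geq_poly_eq0 _ g [seq i%:R | i <- iota 0 (size g)]).
- by apply/allP=> x _; apply/rootP; apply: H.
- rewrite map_inj_uniq ?iota_uniq // => i j /eqP; rewrite eqr_nat => /eqP //.
- by rewrite size_map size_iota.
Qed.

Lemma rank_mxsub m1 m2 b' c' (f : 'I_m1 -> 'I_b') (g : 'I_m2 -> 'I_c') (M : 'M[C]_(b', c')) :
  (\rank (mxsub f g M) <= \rank M)%N.
Proof.
have -> : mxsub f g M = rowsub f 1%:M *m M *m colsub g 1%:M.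
  by rewrite mulmx_colsub mulmx1 -rowsubE; apply/matrixP => i j; rewrite !mxE.
exact: leq_trans (mxrankM_maxl _ _) (mxrankM_maxr _ _).
Qed.

Lemma minor0 m b' c' (M : 'M[C]_(b', c')) (f : 'I_m -> 'I_b') (g : 'I_m -> 'I_c') :
  (\rank M < m)%N -> \det (mxsub f g M) = 0.
Proof.
move=> h; apply/eqP/negPn/negP => hd.
have u : mxsub f g M \in unitmx by rewrite unitmxE unitfE.
have := rank_mxsub f g M; rewrite mxrank_unit // => h2.
by have := leq_ltn_trans h2 h; rewrite ltnn.
Qed.

Lemma widen_lift r (l : 'I_r) : widen_ord (leqnSn r) l = lift ord_max l.
Proof. by apply: val_inj; rewrite /= /bump leqNgt ltn_ord add0n. Qed.

Lemma exists_minor b' c' (M : 'M[C]_(b', c')) :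
  exists (f : 'I_(\rank M) -> 'I_b') (g : 'I_(\rank M) -> 'I_c'), mxsub f g M \in unitmx.
Proof.
pose X := (rowsub (maxrankfun M) M)^T.
have hX : row_full X.
  rewrite /row_full mxrank_tr; exact: maxrowsub_free.
exists (maxrankfun M), (fullrankfun hX).
have := fullrowsub_unit hX; rewrite -unitmx_tr.
congr (_ \in unitmx); apply/matrixP => i j; rewrite !mxE.
by rewrite !ffunE /=.
Qed.

Lemma exists_nonroot (P : {poly C}) : P != 0 -> exists v, P.[v] != 0.
Proof.
move=> P0.
pose s := [seq i%:R | i <- iota 0 (size P)] : seq C.
case: (boolP (all (root P) s)) => [h|/allPn [x _ hx]]; last by exists x.
have : P = 0.
  apply: (roots_geq_poly_eq0 h).
  - rewrite map_inj_uniq ?iota_uniq // => i j /eqP; rewrite eqr_nat => /eqP //.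
  - by rewrite size_map size_iota.
by move=> e; rewrite e eqxx in P0.
Qed.

Section Alg.
Variables (n a : nat) (F : 'I_a -> 'M[C]_n.+1).
Hypothesis F_comm : forall i j, F i *m F j = F j *m F i.

Definition Rs : 'M[C]_(a, n.+1 * n.+1) := \matrix_(i < a) mxvec (F i).
Definition Apred : {pred 'M[C]_n.+1} := fun M => (M \in 'C('C(Rs)))%MS.

Lemma Apred_comm M N : (N \in 'C(Rs))%MS -> Apred M -> M *m N = N *m M.
Proof. by move=> HN /cent_mxP H; rewrite H. Qed.

Lemma FinC i : (F i \in 'C(Rs))%MS.
Proof. apply/cent_rowP=> j; rewrite rowK mxvecK; exact: F_comm. Qed.

Lemma Apred_C M : Apred M -> (M \in 'C(Rs))%MS.
Proof. move=> HM; apply/cent_rowP=> j; rewrite rowK mxvecK; apply/esym/Apred_comm=> //; exact: FinC. Qed.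

Lemma Apred_F i : Apred (F i).
Proof. apply/cent_mxP=> A /cent_rowP H; have := H i; rewrite rowK mxvecK; by []. Qed.

Lemma Apred_subring : subring_closed Apred.
Proof.
split.
- exact: scalar_mx_cent.
- move=> M N /cent_mxP HM /cent_mxP HN; apply/cent_mxP=> A HA.
  by rewrite mulmxBl mulmxBr HM // HN.
- move=> M N /cent_mxP HM /cent_mxP HN; apply/cent_mxP=> A HA.
  rewrite -mulmxE mulmxA HM // -!mulmxA HN // mulmxA.
Qed.

HB.instance Definition _ := GRing.isSubringClosed.Build _ Apred Apred_subring.
Record Aty := AT { Aval : 'M[C]_n.+1; _ : Apred Aval }.
HB.instance Definition _ := [isSub for Aval].
HB.instance Definition _ := [Choice of Aty by <:].
HB.instance Definition _ := [SubChoice_isSubNzRing of Aty by <:].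
Lemma Aty_mulC : commutative (@GRing.mul Aty).
Proof.
move=> [M HM] [N HN]; apply: val_inj => /=.
change (M *m N = N *m M). apply: Apred_comm => //. exact: Apred_C.
Qed.
HB.instance Definition _ := GRing.PzRing_hasCommutativeMul.Build Aty Aty_mulC.

Definition iot (x : C) : Aty := @AT (x%:M) (scalar_mx_cent _ _).
Lemma val_iot x : Aval (iot x) = x%:M. Proof. by []. Qed.
Lemma AvalM (u v : Aty) : Aval (u * v) = Aval u *m Aval v.
Proof. by []. Qed.
Lemma AvalD (u v : Aty) : Aval (u + v) = Aval u + Aval v.
Proof. by []. Qed.
Lemma AvalN (u : Aty) : Aval (- u) = - Aval u.
Proof. by []. Qed.
Lemma Aval0 : Aval (0 : Aty) = 0. Proof. by []. Qed.
Lemma Aval1 : Aval (1 : Aty) = 1%:M. Proof. by []. Qed.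
Lemma Aval_sum I (s : seq I) P (f : I -> Aty) :
  Aval (\sum_(i <- s | P i) f i) = \sum_(i <- s | P i) Aval (f i).
Proof. exact: (big_morph Aval AvalD Aval0). Qed.
Lemma AvalX (u : Aty) l : Aval (u ^+ l) = Aval u ^+ l.
Proof. by elim: l => [|l IH]; rewrite ?expr0 // !exprS AvalM IH. Qed.

Lemma iot_is_zmod : zmod_morphism iot.
Proof. move=> x y; apply: val_inj => /=; exact: raddfB. Qed.
HB.instance Definition _ := GRing.isZmodMorphism.Build C Aty iot iot_is_zmod.
Lemma iot_is_monoid : monoid_morphism iot.
Proof. split=> [|x y]; apply: val_inj => //=; exact: scalar_mxM. Qed.
HB.instance Definition _ := GRing.isMonoidMorphism.Build C Aty iot iot_is_monoid.

Lemma Aval_horner (f : {poly Aty}) v al be :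
  Aval f.[iot v] al be = (\poly_(j < size f) Aval f`_j al be).[v].
Proof.
rewrite horner_poly horner_coef Aval_sum summxE; apply: eq_bigr => i _.
by rewrite -rmorphXn AvalM val_iot mul_mx_scalar mxE mulrC.
Qed.

Lemma poly_zero_A (f : {poly Aty}) : (forall x : C, f.[iot x] = 0) -> f = 0.
Proof.
move=> H.
suff Hv: forall (al be : 'I_n.+1) l, (l < size f)%N -> Aval f`_l al be = 0.
  apply/polyP => l; rewrite coef0.
  case: (ltnP l (size f)) => hl; last by rewrite nth_default.
  by apply: val_inj; apply/matrixP=> al be; rewrite Hv // /= mxE.
move=> al be l hl.
pose g := \poly_(l < size f) (Aval f`_l al be).
have g0 : g = 0.
  apply: poly_allroots => x; rewrite horner_poly.
  have := congr1 (fun u : Aty => Aval u al be) (H x).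
  rewrite horner_coef Aval_sum summxE => E0.
  move: E0; rewrite [X in _ = X -> _]/= [X in _ = X -> _]mxE => E1.
  rewrite -[RHS]E1.
  apply: eq_bigr => i _; rewrite -rmorphXn AvalM val_iot mul_mx_scalar mxE mulrC //.
by have := congr1 (fun p : {poly C} => p`_l) g0; rewrite coef_poly hl coef0.
Qed.

Lemma transfer m (B : 'I_a -> 'M[C]_m) :
  (forall x : 'I_a -> C, \det (\sum_i x i *: B i) = 0) ->
  forall w : 'I_a -> Aty, \det (\matrix_(p, q) \sum_i w i * iot (B i p q)) = 0.
Proof.
move=> H.
suff P: forall j, (j <= a)%N -> forall w : 'I_a -> Aty,
    (forall i : 'I_a, (j <= i)%N -> exists x, w i = iot x) ->
    \det (\matrix_(p, q) \sum_i w i * iot (B i p q)) = 0.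
  by move=> w; apply: (P a (leqnn a)) => i; rewrite leqNgt ltn_ord.
elim=> [|j IH] hj w hw.
  pose x i := Aval (w i) ord0 ord0.
  have hx : forall i, w i = iot (x i).
    move=> i; have [y hy] := hw i (leq0n _).
    by rewrite /x hy val_iot mxE eqxx mulr1n.
  have -> : (\matrix_(p, q) \sum_i w i * iot (B i p q)) = map_mx iot (\sum_i x i *: B i).
    apply/matrixP => p q; rewrite !mxE summxE rmorph_sum; apply: eq_bigr => i _.
    by rewrite mxE rmorphM hx.
  by rewrite det_map_mx H rmorph0.
pose j' : 'I_a := Ordinal hj.
pose PM := \matrix_(p, q) \sum_i (if i == j' then 'X else (w i)%:P) * (iot (B i p q))%:P
  : 'M[{poly Aty}]_m.
have Hev : forall z, map_mx (horner_eval z) PM =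
    \matrix_(p, q) \sum_i (if i == j' then z else w i) * iot (B i p q).
  move=> z; apply/matrixP => p q; rewrite !mxE rmorph_sum; apply: eq_bigr => i _.
  by rewrite rmorphM /= !horner_evalE hornerC; case: eqP => _; rewrite ?hornerX ?hornerC.
have f0 : \det PM = 0.
  apply: poly_zero_A => x; rewrite -horner_evalE -det_map_mx Hev.
  apply: (IH (ltnW hj)) => i hi.
  case: eqP => [_|ne]; first by exists x.
  apply: hw; rewrite ltn_neqAle hi andbT; apply/eqP => e; apply: ne; exact: val_inj.
have E := congr1 (horner_eval (w j')) f0; rewrite -det_map_mx Hev rmorph0 in E.
rewrite -[RHS]E.
congr (\det _); apply/matrixP => p q; rewrite !mxE; apply: eq_bigr => i _.
by case: eqP => [->|].
Qed.

Variables (b c r : nat) (E : 'I_a -> 'M[C]_(b, c)).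
Hypothesis Hr : forall x : 'I_a -> C, (\rank (\sum_i x i *: E i)%R <= r)%N.

Section Main.
Variables (y : 'I_a -> Aty) (I : 'I_r -> 'I_b) (J : 'I_r -> 'I_c).

Definition GA p q := \sum_i y i * iot (E i p q).
Definition dlt := \det (\matrix_(l, l') GA (I l) (J l')).
Definition I' (p : 'I_b) (u : 'I_r.+1) := if unlift ord_max u is Some l then I l else p.
Definition J' (q : 'I_c) (u : 'I_r.+1) := if unlift ord_max u is Some l then J l else q.
Definition kap p (u : 'I_r.+1) : Aty :=
  (-1) ^+ (u + @ord_max r) * \det (row' u (\matrix_(u', l) GA (I' p u') (J l))).

Lemma bordered p q :
  \sum_l GA (I l) q * kap p (lift ord_max l) + GA p q * dlt = 0.
Proof.
have H0 : \det (\matrix_(u, v) GA (I' p u) (J' q v)) = 0.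
  have := @transfer _ (fun i => mxsub (I' p) (J' q) (E i)).
  have -> : (\matrix_(u, v) GA (I' p u) (J' q v)) =
     \matrix_(u, v) \sum_i y i * iot (mxsub (I' p) (J' q) (E i) u v).
    by apply/matrixP => u v; rewrite !mxE; apply: eq_bigr => i _; rewrite mxE.
  apply => x.
  have -> : (\sum_i x i *: mxsub (I' p) (J' q) (E i) : 'M[C]_r.+1) = mxsub (I' p) (J' q) (\sum_i x i *: E i).
    by apply/matrixP => u v; rewrite !mxE !summxE; apply: eq_bigr => i _; rewrite !mxE.
  by apply: minor0; rewrite ltnS.
rewrite (expand_det_col _ ord_max) big_ord_recr /= in H0.
rewrite -[RHS]H0; congr (_ + _).
  apply: eq_bigr => l _; rewrite widen_lift !mxE /I' /J' liftK unlift_none; congr (_ * _).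
  rewrite /cofactor /kap; congr (_ * \det (row' _ _)).
  by apply/matrixP => u v; rewrite !mxE !liftK.
rewrite !mxE /I' /J' unlift_none /cofactor /dlt; congr (_ * _).
rewrite addnn -muln2 exprM sqrr_sign mul1r; congr (\det _).
by apply/matrixP => u v; rewrite !mxE !liftK.
Qed.

Lemma GA_entry p q al ga : Aval (GA p q) al ga = \sum_i E i p q * Aval (y i) al ga.
Proof.
rewrite Aval_sum summxE; apply: eq_bigr => i _.
by rewrite AvalM val_iot mul_mx_scalar mxE.
Qed.

Hypothesis Hdlt : Aval dlt \in unitmx.

Definition Wb p (l : 'I_r) : 'M[C]_n.+1 := - (invmx (Aval dlt) *m Aval (kap p (lift ord_max l))).

Lemma block_id p q : \sum_l Wb p l *m Aval (GA (I l) q) = Aval (GA p q).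
Proof.
have e1 : \sum_l Wb p l *m Aval (GA (I l) q) =
   - (invmx (Aval dlt) *m Aval (\sum_l GA (I l) q * kap p (lift ord_max l))).
  rewrite (Aval_sum _ _ (fun l : 'I_r => GA (I l) q * kap p (lift ord_max l))) mulmx_sumr -sumrN; apply: eq_bigr => l _.
  rewrite /Wb mulNmx -mulmxA [_ * kap _ _]mulrC (AvalM (kap _ _)); reflexivity.
have e2 := bordered p q.
move/eqP: e2; rewrite addr_eq0 => /eqP e2.
by rewrite e1 e2 AvalN mulrC AvalM mulmxN opprK mulKmx.
Qed.

Definition T : 'M[C]_(r * n.+1, c * n.+1) := \sum_i rowsub I (E i) *t Aval (y i).
Definition W : 'M[C]_(b * n.+1, r * n.+1) :=
  \matrix_(i, j) Wb (@mxtens_unindex b n.+1 i).1 (@mxtens_unindex r n.+1 j).1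
                    (@mxtens_unindex b n.+1 i).2 (@mxtens_unindex r n.+1 j).2.

Lemma sum_pair m (G : 'I_(r * m) -> C) :
  \sum_x G x = \sum_(l < r) \sum_(be < m) G (mxtens_index (l, be)).
Proof.
rewrite (reindex (@mxtens_index r m)) /=; last first.
  by exists (@mxtens_unindex r m) => x _; rewrite (mxtens_indexK, mxtens_unindexK).
by rewrite pair_big /=; apply: eq_bigr => -[l be].
Qed.

Lemma BigM_eq : (\sum_i E i *t Aval (y i) : 'M[C]_(b * n.+1, c * n.+1)) = W *m T.
Proof.
apply/matrixP => i j.
case: (mxtens_indexP i) => p al; case: (mxtens_indexP j) => q ga.
rewrite summxE.
under eq_bigr do rewrite tensmxE.
rewrite -GA_entry -block_id summxE mxE sum_pair; apply: eq_bigr => l _.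
rewrite mxE; apply: eq_bigr => be _.
rewrite !mxE !mxtens_indexK /=; congr (_ * _).
rewrite GA_entry summxE; apply: eq_bigr => i0 _; rewrite tensmxE mxE //.
Qed.

Lemma L_main : (\rank (\sum_i E i *t Aval (y i) : 'M[C]_(b * n.+1, c * n.+1))%R <= r * n.+1)%N.
Proof. by rewrite BigM_eq; exact: leq_trans (mxrankM_maxr _ _) (rank_leq_row _). Qed.

End Main.

Definition Fa i : Aty := @AT (F i) (Apred_F i).
Definition Yv (t mu : 'I_a -> C) (v : C) i : Aty := iot v * (iot (t i) * Fa i) + iot (mu i).

Lemma AvalY t mu v i : Aval (Yv t mu v i) = v *: (t i *: F i) + (mu i)%:M.
Proof. by rewrite /Yv AvalD !AvalM !val_iot !mul_scalar_mx. Qed.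

Lemma BigY t mu v : (\sum_i E i *t Aval (Yv t mu v i) : 'M_(b * n.+1, c * n.+1)) =
  v *: (\sum_i t i *: (E i *t F i)) + \sum_i mu i *: (E i *t 1%:M).
Proof.
apply/matrixP => i j; case: (mxtens_indexP i) => p al; case: (mxtens_indexP j) => q ga.
rewrite summxE; under eq_bigr do rewrite tensmxE AvalY.
rewrite mxE [X in _ = _ + X]summxE mxE summxE mulr_sumr -big_split /=.
apply: eq_bigr => i0 _; rewrite !mxE ?mxtens_indexK /=; ring.
Qed.

Lemma final (t mu : 'I_a -> C) : \rank (\sum_i mu i *: E i)%R = r ->
  (\rank (\sum_i t i *: (E i *t F i))%R <= n.+1 * r)%N.
Proof.
move=> Hmu.
set M0 := (\sum_i t i *: (E i *t F i) : 'M[C]_(b * n.+1, c * n.+1)).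
set M1 := (\sum_i mu i *: (E i *t 1%:M) : 'M[C]_(b * n.+1, c * n.+1)).
have [I [J HIJ]] : exists (I : 'I_r -> 'I_b) (J : 'I_r -> 'I_c),
    mxsub I J (\sum_i mu i *: E i)%R \in unitmx.
  by have := exists_minor (\sum_i mu i *: E i)%R; rewrite Hmu.
set S0 := mxsub I J (\sum_i mu i *: E i)%R in HIJ.
pose Delta : {poly Aty} := \det (\matrix_(l, l') \sum_i
   ('X * (iot (t i) * Fa i)%:P + (iot (mu i))%:P) * (iot (E i (I l) (J l')))%:P).
have HDelta : forall v, Delta.[iot v] = dlt (Yv t mu v) I J.
  move=> v; rewrite -horner_evalE -det_map_mx /dlt; congr (\det _).
  apply/matrixP => l l'; rewrite !mxE rmorph_sum /GA; apply: eq_bigr => i _.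
  by rewrite !rmorphM rmorphD rmorphM /= !horner_evalE hornerX !hornerC -polyCM hornerC.
pose Pm : 'M[{poly C}]_n.+1 := \matrix_(al, be) \poly_(j < size Delta) Aval Delta`_j al be.
pose Pd := \det Pm.
have HPd : forall v, Pd.[v] = \det (Aval (dlt (Yv t mu v) I J)).
  move=> v; rewrite -HDelta -horner_evalE -det_map_mx; congr (\det _).
  by apply/matrixP => al be; rewrite !mxE ?horner_evalE Aval_horner.
have Pd0 : Pd != 0.
  apply/eqP => e; have := HPd 0; rewrite e horner0.
  have -> : dlt (Yv t mu 0) I J = iot (\det S0).
    rewrite /dlt -det_map_mx; congr (\det _); apply/matrixP => l l'.
    rewrite !mxE /GA summxE rmorph_sum; apply: eq_bigr => i _.
    by rewrite /Yv rmorph0 mul0r add0r mxE rmorphM.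
  rewrite val_iot det_scalar => /esym /eqP; rewrite expf_eq0 /=.
  by move: HIJ; rewrite unitmxE unitfE => /negbTE ->.
have [f [g Hfg]] := exists_minor M0.
pose S := mxsub f g M0. pose S1 := mxsub f g M1.
pose K := - (invmx S *m S1).
pose Qp := (\det S)%:P * char_poly K.
have HQp : forall v, Qp.[v] = \det (mxsub f g (v *: M0 + M1)).
  move=> v; rewrite hornerM hornerC.
  have -> : mxsub f g (v *: M0 + M1) = S *m (v%:M - K).
    rewrite /K opprK mulmxDr mulKVmx // mul_mx_scalar.
    by apply/matrixP => i j; rewrite !mxE.
  rewrite det_mulmx; congr (_ * _).
  rewrite /char_poly -horner_evalE -det_map_mx; congr (\det _).
  apply/matrixP => i j; rewrite !mxE rmorphB /= rmorphMn /= !horner_evalE hornerX hornerC; reflexivity.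
have Qp0 : Qp != 0.
  by rewrite mulf_neq0 ?polyC_eq0 ?monic_neq0 ?char_poly_monic // -unitfE -unitmxE.
have [w0 Hv] := exists_nonroot (mulf_neq0 Qp0 Pd0).
rewrite hornerM mulf_eq0 negb_or in Hv; case/andP: Hv => HQ HP.
have Hunit : Aval (dlt (Yv t mu w0) I J) \in unitmx by rewrite unitmxE unitfE -HPd.
have := L_main Hunit; rewrite BigY -/M0 -/M1 => h2.
have Hsub : mxsub f g (w0 *: M0 + M1) \in unitmx by rewrite unitmxE unitfE -HQp.
have := rank_mxsub f g (w0 *: M0 + M1); rewrite mxrank_unit // => h1.
rewrite [(n.+1 * r)%N]mulnC; exact: leq_trans h1 h2.
Qed.

End Alg.

Theorem mainTheorem2 (a b c k r : nat)
  (E : 'I_a -> 'M[C]_(b, c)) (F : 'I_a -> 'M[C]_k)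
  (E_basis : free ([seq E i | i : 'I_a] : seq 'M[C]_(b, c)))
  (E_bounded : bounded_rank E r)
  (F_basis : free ([seq F i | i : 'I_a] : seq 'M[C]_k))
  (F_comm : forall i j : 'I_a, F i *m F j = F j *m F i) :
  forall t : 'I_a -> C, (\rank (\sum_(i < a) t i *: (E i *t F i))%R <= k * r)%N.
Proof.
case: k F F_basis F_comm => [|n] F _ F_comm t.
  by rewrite (leq_trans (rank_leq_row _)) // muln0.
case: E_bounded => Hr [mu Hmu] _.
have h := final F_comm Hr t Hmu. exact h.
Qed.
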